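(* Let $G$ be a graph such that the elementary algebraic cycles of $G$ are the circuits of a matroid $M$ on $E(G)$ (the algebraic cycle matroid of $G$). Then the cocircuits of $M$ are precisely the skew cuts of $G$.
   Context: Matroids may be infinite: a matroid on $E$ is given by $\mathcal I\subseteq 2^E$ with $\emptyset\in\mathcal I$; $\mathcal I$ closed under subsets; for non-maximal $I\in\mathcal I$ and maximal $I'\in\mathcal I$ some $x\in I'\setminus I$ has $I\cup\{x\}\in\mathcal I$; and for every $I\in\mathcal I$ and $I\subseteq X\subseteq E$ the set $\{I'\in\mathcal I:I\subseteq I'\subseteq X\}$ has a maximal element. Circuits are minimal dependent sets; the dual $M^*$ has as bases the complements of bases of $M$; cocircuits of $M$ are the circuits of $M^*$. Graphs may have parallel edges and loops. The elementary algebraic cycles of $G$ are the edge sets of the finite cycles and of the double rays (two-way infinite paths) of $G$. A ray is a one-way infinite path. A cut $E(A,B)$ is the set of edges between the classes $A,B$ of a partition of $V(G)$. A side $A$ of a cut is small if the induced subgraph $G[A]$ contains no ray. A non-empty cut $F$ is skew if one of its sides is small and $F$ is minimal with this property among the non-empty cuts of $G$ (no non-empty cut properly contained in $F$ has a small side). *)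

(* Defs.v *)
(* sets are predicates T -> Prop; graphs and matroids may be infinite. *)
From Stdlib Require Import ZArith Arith.

Set Implicit Arguments.

Section Sets.
Context {T : Type}.
Definition subset (A B : T -> Prop) : Prop := forall x, A x -> B x.
Definition seteq (A B : T -> Prop) : Prop := subset A B /\ subset B A.
Definition psubset (A B : T -> Prop) : Prop := subset A B /\ ~ subset B A.
Definition maximal_in (F : (T -> Prop) -> Prop) (X : T -> Prop) : Prop :=
  F X /\ forall Y, F Y -> subset X Y -> subset Y X.
End Sets.

Section Matroid.
Context {E : Type}.
Variable I : (E -> Prop) -> Prop.

Definition is_matroid : Prop :=
  I (fun _ => False) /\
  (forall A B, I B -> subset A B -> I A) /\
  (forall A B, I A -> ~ maximal_in I A -> maximal_in I B ->
     exists x, B x /\ ~ A x /\ I (fun y => A y \/ y = x)) /\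
  (forall A X, I A -> subset A X ->
     exists Mx, maximal_in (fun J => I J /\ subset A J /\ subset J X) Mx).

Definition is_base (B : E -> Prop) : Prop := maximal_in I B.

Definition is_circuit (C : E -> Prop) : Prop :=
  ~ I C /\ forall D, subset D C -> ~ I D -> subset C D.

(* the dual M^*: its bases are the complements of bases of M, so its
   independent sets are the subsets of such complements *)
Definition dual_indep (J : E -> Prop) : Prop :=
  exists B, is_base B /\ forall x, J x -> ~ B x.

End Matroid.
Definition is_cocircuit {E : Type} (I : (E -> Prop) -> Prop) (D : E -> Prop) : Prop :=
  is_circuit (dual_indep I) D.

Section Graph.
Context {V E : Type}.
Variable ends : E -> V * V.

Definition joins (e : E) (u w : V) : Prop := ends e = (u, w) \/ ends e = (w, u).

(* edge set of a finite cycle (length n >= 1; n = 1 a loop, n = 2 two parallel edges) *)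
Definition finite_cycle_edges (C : E -> Prop) : Prop :=
  exists (n : nat) (v : nat -> V) (f : nat -> E),
    0 < n /\
    (forall i j, i < n -> j < n -> v i = v j -> i = j) /\
    (forall i j, i < n -> j < n -> f i = f j -> i = j) /\
    (forall i, i < n -> joins (f i) (v i) (v ((i + 1) mod n))) /\
    (forall e, C e <-> exists i, i < n /\ f i = e).

Definition double_ray_edges (C : E -> Prop) : Prop :=
  exists (v : Z -> V) (f : Z -> E),
    (forall i j, v i = v j -> i = j) /\
    (forall i, joins (f i) (v i) (v (i + 1)%Z)) /\
    (forall e, C e <-> exists i, f i = e).

Definition elementary_algebraic_cycle (C : E -> Prop) : Prop :=
  finite_cycle_edges C \/ double_ray_edges C.

Definition cut (A : V -> Prop) : E -> Prop :=
  fun e => exists u w, joins e u w /\ A u /\ ~ A w.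

Definition has_ray_in (A : V -> Prop) : Prop :=
  exists v : nat -> V,
    (forall i j, v i = v j -> i = j) /\
    (forall n, A (v n) /\ exists e, joins e (v n) (v (S n))).

Definition cut_with_small_side (F : E -> Prop) : Prop :=
  exists A : V -> Prop, seteq F (cut A) /\ ~ has_ray_in A.

Definition skew_cut (F : E -> Prop) : Prop :=
  (exists e, F e) /\ cut_with_small_side F /\
  forall F', (exists e, F' e) -> psubset F' F -> ~ cut_with_small_side F'.
End Graph.

(* Main.v *)
Require Import Defs.
From Stdlib Require Import Classical ClassicalEpsilon Lia ZArith Arith.

Lemma base_exists {E : Type} (Ind : (E -> Prop) -> Prop) :
  is_matroid Ind -> exists B, is_base Ind B.
Proof.
  intros HM. destruct HM as [H0 [H1 [H2 H3]]].
  destruct (H3 (fun _ => False) (fun _ => True) H0) as [Mx [[HI _] HMx]].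
  - intros x [].
  - exists Mx. split; [exact HI|]. intros Y HY HS. apply HMx; auto.
    split; [exact HY|]. split; intros x Hx; [destruct Hx|trivial].
Qed.

Lemma not_dual_indep {E : Type} (Ind : (E -> Prop) -> Prop) X :
  (forall B, is_base Ind B -> exists x, X x /\ B x) -> ~ dual_indep Ind X.
Proof.
  intros H [B [HB HD]]. destruct (H B HB) as [x [Hx Hb]]. exact (HD x Hx Hb).
Qed.

Lemma not_dual_indep' {E : Type} (Ind : (E -> Prop) -> Prop) X B :
  ~ dual_indep Ind X -> is_base Ind B -> exists x, X x /\ B x.
Proof.
  intros H HB. apply NNPP. intro Hn. apply H. exists B. split; auto.
  intros x Hx Hb. apply Hn. eauto.
Qed.

Lemma fund_circuit {E : Type} (Ind : (E -> Prop) -> Prop) :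
  is_matroid Ind -> forall B e, is_base Ind B -> ~ B e ->
  exists C, is_circuit Ind C /\ C e /\ forall x, C x -> B x \/ x = e.
Proof.
  intros HM B e HB Be. pose proof HM as [H0 [H1 [H2 H3]]].
  set (S := fun x => B x /\ Ind (fun y => (B y \/ y = e) /\ y <> x)).
  exists (fun x => x = e \/ S x). split; [split|split].
  - intro HC.
    destruct (H3 (fun x => x = e \/ S x) (fun y => B y \/ y = e) HC) as [K [[HK [HCK HKX]] HKm]].
    { intros x [->|[Hx _]]; auto. }
    assert (HKb : is_base Ind K).
    { apply NNPP. intro Hn. destruct (H2 K B HK Hn HB) as [x [Bx [Kx HKx]]].
      apply Kx. apply (HKm (fun y => K y \/ y = x)); auto.
      - split; [exact HKx|split].
        + intros y Hy; left; auto.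
        + intros y [Hy| ->]; auto.
      - intros y Hy; left; auto. }
    assert (Hne : ~ subset (fun y => B y \/ y = e) K).
    { intro Hs. assert (Ind (fun y => B y \/ y = e)) by (eapply H1; eauto).
      destruct HB as [_ HBm]. apply Be. apply (HBm _ H); auto. intros y Hy; auto. }
    destruct (not_all_ex_not _ _ Hne) as [t Ht].
    apply imply_to_and in Ht. destruct Ht as [Ht1 Ht2].
    assert (Bt : B t). { destruct Ht1 as [| ->]; auto. exfalso; apply Ht2, HCK; auto. }
    assert (Hnm : ~ maximal_in Ind (fun y => B y /\ y <> t)).
    { intros [_ Hm]. destruct HB as [HBi _].
      assert (Hs := Hm B HBi (fun y Hy => proj1 Hy) t Bt). destruct Hs; auto. }
    assert (HBt : Ind (fun y => B y /\ y <> t)) by (eapply H1; [apply HB| intros y [? ?]; auto]).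
    destruct (H2 _ K HBt Hnm HKb) as [x [Kx [Hx HIx]]].
    destruct (HKX x Kx) as [Bx| ->].
    + assert (x = t) by (apply NNPP; intro; apply Hx; auto). subst. auto.
    + apply Ht2. apply HCK. right. split; auto.
      eapply H1; [exact HIx|]. intros y [[Hy|Hy] Hyt]; [left; auto| right; auto].
  - intros D HD HDi x Hx. apply NNPP. intro HDx. apply HDi.
    destruct Hx as [-> | [Bx Hx]].
    + apply (H1 D B); [apply HB|]. intros y Hy. destruct (HD y Hy) as [->|[? _]]; auto.
      contradiction.
    + eapply H1; [exact Hx|]. intros y Hy. split.
      * destruct (HD y Hy) as [->|[? _]]; auto.
      * intros ->; auto.
  - auto.
  - intros x [->|[Bx _]]; auto.
Qed.

Lemma ortho {E : Type} (Ind : (E -> Prop) -> Prop) :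
  is_matroid Ind -> forall D C e, is_cocircuit Ind D -> is_circuit Ind C ->
  C e -> D e -> (forall x, C x -> D x -> x = e) -> False.
Proof.
  intros HM D C e [HDd HDm] [HCd HCm] Ce De Hx.
  pose proof HM as [H0 [H1 [H2 H3]]].
  assert (HDe : dual_indep Ind (fun y => D y /\ y <> e)).
  { apply NNPP. intro Hn. assert (Hs := HDm _ (fun y Hy => proj1 Hy) Hn e De).
    destruct Hs; auto. }
  destruct HDe as [B [HB HBD]].
  assert (HCe : Ind (fun y => C y /\ y <> e)).
  { apply NNPP. intro Hn. assert (Hs := HCm _ (fun y Hy => proj1 Hy) Hn e Ce).
    destruct Hs; auto. }
  destruct (H3 _ (fun y => (B y /\ y <> e) \/ (C y /\ y <> e)) HCe) as [K [[HK [HCK HKY]] HKm]].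
  { intros y Hy; auto. }
  assert (HKb : is_base Ind K).
  { apply NNPP. intro Hn. destruct (H2 K B HK Hn HB) as [x [Bx [Kx HKx]]].
    destruct (classic (x = e)) as [->|Hxe].
    - apply HCd. eapply H1; [exact HKx|]. intros y Hy.
      destruct (classic (y = e)); [right; auto| left; apply HCK; auto].
    - apply Kx. apply (HKm (fun y => K y \/ y = x)); auto.
      + split; [exact HKx|split].
        * intros y Hy; left; auto.
        * intros y [Hy| ->]; auto.
      + intros y Hy; left; auto. }
  apply HDd. exists K. split; auto. intros x Dx Kx.
  destruct (HKY x Kx) as [[Bx Hxe]|[Cx Hxe]].
  - eapply HBD; eauto.
  - apply Hxe. auto.
Qed.

Lemma contains_cocircuit {E : Type} (Ind : (E -> Prop) -> Prop) :
  is_matroid Ind -> forall D, ~ dual_indep Ind D ->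
  exists D', is_cocircuit Ind D' /\ subset D' D.
Proof.
  intros HM D HD. pose proof HM as [H0 [H1 [H2 H3]]].
  destruct (H3 (fun _ => False) (fun y => ~ D y) H0) as [J [[HJ [_ HJX]] HJm]].
  { intros x []. }
  destruct (H3 J (fun _ => True) HJ) as [B [[HBi [HJB _]] HBm]].
  { intros x _; trivial. }
  assert (HB : is_base Ind B).
  { split; auto. intros Y HY HS. apply HBm; auto. split; [exact HY|split].
    - intros y Hy; auto.
    - intros y _; trivial. }
  destruct (not_dual_indep' Ind D B HD HB) as [f [Df Bf]].
  set (Df' := fun x => x = f \/ (~ B x /\ Ind (fun y => (B y /\ y <> f) \/ y = x))).
  assert (HBf : Ind (fun y => B y /\ y <> f)) by (eapply H1; [exact HBi| intros y [? ?]; auto]).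
  assert (Hnm : ~ maximal_in Ind (fun y => B y /\ y <> f)).
  { intros [_ Hm]. assert (Hs := Hm B HBi (fun y Hy => proj1 Hy) f Bf). destruct Hs; auto. }
  exists Df'. split; [split|].
  - intros [B' [HB' HB'D]].
    destruct (H2 _ B' HBf Hnm HB') as [x [B'x [Hx HIx]]].
    assert (Hxf : x <> f). { intros ->. apply (HB'D f); auto. left; auto. }
    apply (HB'D x); auto. right. split; [intro Bx; apply Hx; auto | exact HIx].
  - intros D2 HD2 HD2i x Hx. apply NNPP. intro HD2x. apply HD2i.
    destruct Hx as [-> | [Bx HIx]].
    + exists B. split; auto. intros y Hy By. destruct (HD2 y Hy) as [->|[? _]]; auto.
    + assert (HB2 : is_base Ind (fun y => (B y /\ y <> f) \/ y = x)).
      { split; auto. apply NNPP. intro Hn. apply not_all_ex_not in Hn. destruct Hn as [Y HY].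
        apply imply_to_and in HY. destruct HY as [HYi HY].
        apply imply_to_and in HY. destruct HY as [HYs HY].
        assert (Hnm2 : ~ maximal_in Ind (fun y => (B y /\ y <> f) \/ y = x)).
        { intros [_ Hm]. apply HY. apply Hm; auto. }
        destruct (H2 _ B HIx Hnm2 HB) as [z [Bz [Hz HIz]]].
        assert (z = f). { apply NNPP. intro. apply Hz. left; auto. }
        subst z. apply Bx. destruct HB as [_ HBm'].
        apply (HBm' (fun y => B y \/ y = x)).
        - eapply H1; [exact HIz|]. intros y [Hy| ->]; [|left; right; auto].
          destruct (classic (y = f)) as [->|]; [right; auto| left; left; auto].
        - intros y Hy; left; auto.
        - right; auto. }
      exists (fun y => (B y /\ y <> f) \/ y = x). split; auto.
      intros y Hy [[By Hyf]| ->]; [|contradiction].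
      destruct (HD2 y Hy) as [->|[? _]]; auto.
  - intros x [-> | [Bx HIx]]; auto. apply NNPP. intro Dx.
    apply Bx. apply HJB. apply (HJm (fun y => J y \/ y = x)).
    + split; [|split].
      * eapply H1; [exact HIx|]. intros y [Jy| ->]; [left; split; auto| right; auto].
        intros ->. apply (HJX f); auto.
      * intros y [].
      * intros y [Jy| ->]; auto.
    + intros y Hy; left; auto.
    + right; auto.
Qed.

Lemma joins_sym {V E : Type} (ends : E -> V * V) e u w :
  joins ends e u w -> joins ends e w u.
Proof. unfold joins; tauto. Qed.

Lemma joins_cases {V E : Type} (ends : E -> V * V) g a b c d :
  joins ends g a b -> joins ends g c d -> (a = c /\ b = d) \/ (a = d /\ b = c).
Proof.
  unfold joins; intros [H1|H1] [H2|H2]; rewrite H1 in H2; injection H2; intros; subst; auto.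
Qed.

Lemma cut_joins {V E : Type} (ends : E -> V * V) A g a b :
  cut ends A g -> joins ends g a b -> ~ (A a <-> A b).
Proof.
  intros [u [w [Hj [Hu Hw]]]] Hg.
  destruct (joins_cases ends g u w a b Hj Hg) as [[-> ->]|[-> ->]]; tauto.
Qed.

Lemma ncut_joins {V E : Type} (ends : E -> V * V) A g a b :
  ~ cut ends A g -> joins ends g a b -> (A a <-> A b).
Proof.
  intros Hn Hg. split; intro H; apply NNPP; intro H'; apply Hn.
  - exists a, b; auto.
  - exists b, a; split; auto. apply joins_sym; auto.
Qed.

Lemma chain (P : nat -> Prop) lo hi :
  (forall i, lo <= i -> i < hi -> (P i <-> P (S i))) ->
  forall m, lo <= m -> m <= hi -> (P lo <-> P m).
Proof.
  intros H m. induction m; intros H1 H2.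
  - assert (lo = 0) by lia. subst; tauto.
  - destruct (Nat.eq_dec lo (S m)) as [->|]; [tauto|].
    rewrite IHm by lia. apply H; lia.
Qed.

Lemma parity_fin {V E : Type} (ends : E -> V * V) A C e :
  finite_cycle_edges ends C -> cut ends A e -> C e ->
  (forall x, C x -> cut ends A x -> x = e) -> False.
Proof.
  intros [n [v [f [Hn [Hv [Hf [Hj HC]]]]]]] Hcut Ce Hx.
  destruct (proj1 (HC e) Ce) as [k [Hk Hfk]].
  assert (Hst : forall i, i < n -> i <> k -> (A (v i) <-> A (v ((i + 1) mod n)))).
  { intros i Hi Hik. apply (ncut_joins ends A (f i)); [|apply Hj; auto].
    intro Hc. apply Hik. apply Hf; auto. rewrite Hfk. apply Hx; auto.
    apply HC. eauto. }
  assert (Hk' := cut_joins ends A e _ _ Hcut (eq_ind _ (fun g => joins ends g _ _) (Hj k Hk) _ Hfk)).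
  assert (Hmod : forall i, i + 1 < n -> (i + 1) mod n = S i).
  { intros i Hi. rewrite Nat.mod_small by lia. lia. }
  assert (Hmodn : (n - 1 + 1) mod n = 0).
  { replace (n - 1 + 1) with n by lia. apply Nat.Div0.mod_same. }
  assert (H0k : A (v 0) <-> A (v k)).
  { apply (chain (fun i => A (v i)) 0 k); try lia. intros i _ Hi.
    rewrite <- (Hmod i) by lia. apply Hst; lia. }
  destruct (Nat.eq_dec k (n - 1)) as [Hk1|Hk1].
  - subst k. rewrite Hmodn in Hk'. tauto.
  - rewrite Hmod in Hk' by lia.
    assert (H1 : A (v (S k)) <-> A (v (n - 1))).
    { apply (chain (fun i => A (v i)) (S k) (n - 1)); try lia. intros i Hi1 Hi.
      rewrite <- (Hmod i) by lia. apply Hst; lia. }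
    assert (H2 := Hst (n - 1) ltac:(lia) ltac:(lia)). rewrite Hmodn in H2.
    tauto.
Qed.

Lemma parity_dr {V E : Type} (ends : E -> V * V) A C e :
  double_ray_edges ends C -> cut ends A e -> C e ->
  (forall x, C x -> cut ends A x -> x = e) -> has_ray_in ends A.
Proof.
  intros [v [f [Hv [Hj HC]]]] Hcut Ce Hx.
  destruct (proj1 (HC e) Ce) as [k Hfk].
  assert (Hst : forall i, i <> k -> (A (v i) <-> A (v (i + 1)%Z))).
  { intros i Hik. apply (ncut_joins ends A (f i)); [|apply Hj; auto].
    intro Hc. apply Hik. assert (Hfi : f i = e) by (apply Hx; auto; apply HC; eauto).
    assert (J1 := Hj i). assert (J2 := Hj k). rewrite Hfi in J1. rewrite Hfk in J2.
    destruct (joins_cases ends e _ _ _ _ J1 J2) as [[Ha _]|[Ha Hb]].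
    - apply Hv; auto.
    - apply Hv in Ha. apply Hv in Hb. lia. }
  assert (Hk' := Hj k). rewrite Hfk in Hk'. apply (cut_joins ends A e _ _ Hcut) in Hk'.
  destruct (classic (A (v (k + 1)%Z))) as [Hk1|Hk1].
  - exists (fun n => v (k + 1 + Z.of_nat n)%Z). split.
    + intros i j Hij. apply Hv in Hij. lia.
    + assert (HA : forall n, A (v (k + 1 + Z.of_nat n)%Z)).
      { induction n. - replace (k + 1 + Z.of_nat 0)%Z with (k+1)%Z by lia. auto.
        - replace (k + 1 + Z.of_nat (S n))%Z with ((k + 1 + Z.of_nat n) + 1)%Z by lia.
          apply (proj1 (Hst (k + 1 + Z.of_nat n)%Z ltac:(lia))); auto. }
      intro n. split; auto. exists (f (k + 1 + Z.of_nat n)%Z).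
      replace (k + 1 + Z.of_nat (S n))%Z with ((k + 1 + Z.of_nat n) + 1)%Z by lia. apply Hj.
  - assert (Hk0 : A (v k)) by tauto.
    exists (fun n => v (k - Z.of_nat n)%Z). split.
    + intros i j Hij. apply Hv in Hij. lia.
    + assert (HA : forall n, A (v (k - Z.of_nat n)%Z)).
      { induction n. - replace (k - Z.of_nat 0)%Z with k by lia. auto.
        - assert (Hs := Hst (k - Z.of_nat (S n))%Z ltac:(lia)).
          replace (k - Z.of_nat (S n) + 1)%Z with (k - Z.of_nat n)%Z in Hs by lia. tauto. }
      intro n. split; auto. exists (f (k - Z.of_nat (S n))%Z). apply joins_sym.
      replace (k - Z.of_nat n)%Z with (k - Z.of_nat (S n) + 1)%Z at 1 by lia. apply Hj.
Qed.

Lemma dir1 {V E : Type} (ends : E -> V * V) (Ind : (E -> Prop) -> Prop) :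
  is_matroid Ind ->
  (forall C, is_circuit Ind C <-> elementary_algebraic_cycle ends C) ->
  forall A e, ~ has_ray_in ends A -> cut ends A e ->
  forall B, is_base Ind B -> exists x, cut ends A x /\ B x.
Proof.
  intros HM HC A e HA He B HB. apply NNPP. intro Hn.
  assert (Be : ~ B e) by (intro; apply Hn; eauto).
  destruct (fund_circuit Ind HM B e HB Be) as [C [HCc [Ce HCB]]].
  assert (Hx : forall x, C x -> cut ends A x -> x = e).
  { intros x Cx Hcx. destruct (HCB x Cx); auto. exfalso; apply Hn; eauto. }
  destruct (proj1 (HC C) HCc) as [Hf|Hd].
  - exact (parity_fin ends A C e Hf He Ce Hx).
  - exact (HA (parity_dr ends A C e Hd He Ce Hx)).
Qed.

Definition walk {V E : Type} (ends : E -> V * V) (H : E -> Prop)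
  (p : nat -> V) (n : nat) : Prop :=
  forall i, i < n -> exists g, H g /\ joins ends g (p i) (p (S i)).

Definition reach {V E : Type} (ends : E -> V * V) (H : E -> Prop) (x y : V) : Prop :=
  exists p n, p 0 = x /\ p n = y /\ walk ends H p n.

Lemma reach_refl {V E : Type} (ends : E -> V * V) H x : reach ends H x x.
Proof. exists (fun _ => x), 0. split; [auto|split; [auto|]]. intros i Hi; lia. Qed.

Lemma reach_step {V E : Type} (ends : E -> V * V) H x y z g :
  reach ends H x y -> H g -> joins ends g y z -> reach ends H x z.
Proof.
  intros [p [n [H0 [Hn Hw]]]] Hg Hj.
  exists (fun i => if Nat.eqb i (S n) then z else p i), (S n).
  simpl. split; [auto|split].
  - rewrite Nat.eqb_refl; auto.
  - intros i Hi. destruct (Nat.eqb_spec i (S n)); [lia|].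
    destruct (Nat.eqb_spec (S i) (S n)).
    + exists g. assert (i = n) by lia. subst. auto.
    + apply Hw. lia.
Qed.

Lemma walk_reach {V E : Type} (ends : E -> V * V) H x p n :
  p 0 = x -> walk ends H p n -> forall m, m <= n -> reach ends H x (p m).
Proof.
  intros H0 Hw m. induction m; intros Hm.
  - rewrite H0. apply reach_refl.
  - destruct (Hw m ltac:(lia)) as [g [Hg Hj]]. eapply reach_step; eauto. apply IHm; lia.
Qed.

Lemma reach_trans {V E : Type} (ends : E -> V * V) H x y z :
  reach ends H x y -> reach ends H y z -> reach ends H x z.
Proof.
  intros Hxy [p [n [H0 [Hn Hw]]]]. subst z.
  assert (forall m, m <= n -> reach ends H x (p m)).
  { induction m; intros Hm. - rewrite H0; auto.
    - destruct (Hw m ltac:(lia)) as [g [Hg Hj]].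
      apply (reach_step ends H x (p m) (p (S m)) g); auto. apply IHm; lia. }
  auto.
Qed.

Lemma reach_sym {V E : Type} (ends : E -> V * V) H x y :
  reach ends H x y -> reach ends H y x.
Proof.
  intros [p [n [H0 [Hn Hw]]]]. subst y.
  assert (forall m, m <= n -> reach ends H (p m) x).
  { induction m; intros Hm. - rewrite H0; apply reach_refl.
    - destruct (Hw m ltac:(lia)) as [g [Hg Hj]]. eapply reach_trans; [|apply IHm; lia].
      eapply reach_step; [apply reach_refl|exact Hg|apply joins_sym; exact Hj]. }
  auto.
Qed.

Lemma min_nat (Q : nat -> Prop) :
  (exists n, Q n) -> exists n, Q n /\ forall m, m < n -> ~ Q m.
Proof.
  intros [n Hn]. apply NNPP. intro Hc.
  assert (forall k, forall m, m <= k -> ~ Q m).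
  { induction k; intros m Hm HQ.
    - apply Hc. exists m. split; auto. intros; lia.
    - destruct (Nat.eq_dec m (S k)).
      + subst. apply Hc. exists (S k). split; auto. intros m' Hm'. apply IHk; lia.
      + apply (IHk m); auto; lia. }
  exact (H n n (le_n n) Hn).
Qed.

Lemma shortest_walk {V E : Type} (ends : E -> V * V) H (T : V -> Prop) x :
  (exists p n, p 0 = x /\ T (p n) /\ walk ends H p n) ->
  exists p n, p 0 = x /\ T (p n) /\ walk ends H p n /\
    (forall i, i < n -> ~ T (p i)) /\
    (forall i j, i <= n -> j <= n -> p i = p j -> i = j).
Proof.
  intros Hex.
  destruct (min_nat (fun n => exists p, p 0 = x /\ T (p n) /\ walk ends H p n)) as
    [n [[p [H0 [HT Hw]]] Hmin]].
  { destruct Hex as [p [n Hp]]; eauto. }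
  exists p, n. split; [auto|split; [auto|split; [auto|split]]].
  - intros i Hi HTi. apply (Hmin i Hi). exists p. split; auto. split; auto.
    intros m Hm. apply Hw. lia.
  - assert (Hlt : forall i j, i < j -> j <= n -> p i = p j -> False).
    { intros i j Hij Hj Hp. apply (Hmin (n - (j - i)) ltac:(lia)).
      exists (fun m => if Nat.leb m i then p m else p (m + (j - i))).
      split; [simpl; auto|split].
      - destruct (Nat.leb_spec (n - (j - i)) i).
        + assert (n = j) by lia. subst. replace (j - (j - i)) with i by lia. rewrite Hp. auto.
        + replace (n - (j - i) + (j - i)) with n by lia. auto.
      - intros m Hm. destruct (Nat.leb_spec m i); destruct (Nat.leb_spec (S m) i).
        + apply Hw; lia.
        + assert (m = i) by lia. subst m.
          destruct (Hw j ltac:(lia)) as [g [Hg Hjg]]. exists g. split; auto.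
          rewrite Hp. replace (S i + (j - i)) with (S j) by lia. auto.
        + lia.
        + destruct (Hw (m + (j - i)) ltac:(lia)) as [g [Hg Hjg]]. exists g. split; auto.
          }
    intros i j Hi Hj Hp. destruct (Nat.lt_total i j) as [|[|]]; auto.
    + exfalso; eauto.
    + exfalso. apply (Hlt j i); auto.
Qed.

Definition Orth {V E : Type} (ends : E -> V * V) (D : E -> Prop) : Prop :=
  forall C e, elementary_algebraic_cycle ends C -> C e -> D e ->
  (forall x, C x -> D x -> x = e) -> False.

Lemma choose_fun {E : Type} (e0 : E) (P : nat -> E -> Prop) n :
  (forall i, i < n -> exists g, P i g) -> exists f : nat -> E, forall i, i < n -> P i (f i).
Proof.
  intros H. exists (fun i => epsilon (inhabits e0) (P i)).
  intros i Hi. apply epsilon_spec. auto.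
Qed.

Lemma F1 {V E : Type} (ends : E -> V * V) D :
  Orth ends D -> forall g x y, D g -> joins ends g x y ->
  ~ reach ends (fun h => ~ D h) x y.
Proof.
  intros HO g x y Dg Hj Hr.
  destruct (shortest_walk ends (fun h => ~ D h) (fun z => z = y) x) as
    [p [n [H0 [Hn [Hw [_ Hd]]]]]].
  { destruct Hr as [p [n [H0 [Hn Hw]]]]. exists p, n; auto. }
  destruct (choose_fun g (fun i h => ~ D h /\ joins ends h (p i) (p (S i))) n Hw) as [f Hf].
  set (f' := fun i => if Nat.eqb i n then g else f i).
  apply (HO (fun z => exists i, i < S n /\ f' i = z) g).
  - left. exists (S n), p, f'. split; [lia|split; [|split; [|split]]].
    + intros i j Hi Hj2 Hp. apply Hd; auto; lia.
    + intros i j Hi Hj2. unfold f'.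
      destruct (Nat.eqb_spec i n); destruct (Nat.eqb_spec j n); intro Hij.
      * lia.
      * exfalso. destruct (Hf j ltac:(lia)) as [Hn' _]. rewrite <- Hij in Hn'. auto.
      * exfalso. destruct (Hf i ltac:(lia)) as [Hn' _]. rewrite Hij in Hn'. auto.
      * destruct (Hf i ltac:(lia)) as [_ J1]. destruct (Hf j ltac:(lia)) as [_ J2].
        rewrite Hij in J1.
        destruct (joins_cases ends _ _ _ _ _ J1 J2) as [[Ha _]|[Ha Hb]].
        -- apply Hd; auto; lia.
        -- apply Hd in Ha; [|lia|lia]. apply Hd in Hb; [|lia|lia]. lia.
    + intros i Hi. unfold f'. destruct (Nat.eqb_spec i n).
      * subst i. replace ((n + 1) mod S n) with 0.
        -- rewrite Hn, H0. apply joins_sym; auto.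
        -- replace (n + 1) with (S n) by lia. symmetry. apply Nat.Div0.mod_same.
      * rewrite Nat.mod_small by lia. replace (i + 1) with (S i) by lia. apply Hf; lia.
    + intros z. tauto.
  - exists n. split; [lia|]. unfold f'. rewrite Nat.eqb_refl. auto.
  - auto.
  - intros z [i [Hi Hfi]] Dz. unfold f' in Hfi. destruct (Nat.eqb_spec i n); auto.
    exfalso. destruct (Hf i ltac:(lia)) as [Hn' _]. rewrite Hfi in Hn'. auto.
Qed.

Lemma no_inner {V E : Type} (ends : E -> V * V) D :
  Orth ends D -> forall x h a b, D h -> joins ends h a b ->
  reach ends (fun h => ~ D h) x a -> reach ends (fun h => ~ D h) x b -> False.
Proof.
  intros HO x h a b Dh Hj Ha Hb. apply (F1 ends D HO h a b Dh Hj).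
  eapply reach_trans; [apply reach_sym; eauto| eauto].
Qed.

Lemma ray_from {V E : Type} (ends : E -> V * V) D x :
  Orth ends D -> has_ray_in ends (reach ends (fun h => ~ D h) x) ->
  exists (r : nat -> V) (fr : nat -> E), r 0 = x /\ (forall i j, r i = r j -> i = j) /\
    forall n, reach ends (fun h => ~ D h) x (r n) /\ ~ D (fr n) /\ joins ends (fr n) (r n) (r (S n)).
Proof.
  intros HO [v [Hv Hr]].
  set (H := fun h => ~ D h).
  pose (fv := fun n => proj1_sig (constructive_indefinite_description _ (proj2 (Hr n)))).
  assert (Hfv : forall n, joins ends (fv n) (v n) (v (S n))).
  { intro n. unfold fv. destruct (constructive_indefinite_description _ _); auto. }
  assert (HfvD : forall n, ~ D (fv n)).
  { intros n Dn. apply (no_inner ends D HO x (fv n) (v n) (v (S n))); auto;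
    apply Hr. }
  destruct (shortest_walk ends H (fun z => exists k, v k = z) x) as
    [p [n [H0 [[k Hk] [Hw [HT Hd]]]]]].
  { destruct (proj1 (Hr 0)) as [p [n [H0 [Hn Hw]]]]. exists p, n. split; eauto. }
  destruct (choose_fun (fv 0) (fun i h => H h /\ joins ends h (p i) (p (S i))) n Hw) as [f Hf].
  exists (fun i => if Nat.leb i n then p i else v (k + (i - n))),
         (fun i => if Nat.ltb i n then f i else fv (k + (i - n))).
  split; [simpl; auto|split].
  - intros i j. destruct (Nat.leb_spec i n); destruct (Nat.leb_spec j n); intro Hij.
    + apply Hd; auto.
    + destruct (Nat.eq_dec i n).
      * subst i. rewrite <- Hk in Hij. apply Hv in Hij. lia.
      * exfalso. apply (HT i ltac:(lia)). eauto.
    + destruct (Nat.eq_dec j n).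
      * subst j. rewrite <- Hk in Hij. apply Hv in Hij. lia.
      * exfalso. apply (HT j ltac:(lia)). eauto.
    + apply Hv in Hij. lia.
  - intro m. split; [|split].
    + destruct (Nat.leb_spec m n).
      * apply (walk_reach ends H x p n); auto.
      * apply Hr.
    + destruct (Nat.ltb_spec m n); [apply Hf; auto| apply HfvD].
    + destruct (Nat.ltb_spec m n).
      * destruct (Nat.leb_spec m n); [|lia]. destruct (Nat.leb_spec (S m) n); [|lia]. apply Hf; auto.
      * destruct (Nat.leb_spec (S m) n); [lia|].
        replace (k + (S m - n)) with (S (k + (m - n))) by lia.
        destruct (Nat.leb_spec m n).
        -- assert (m = n) by lia. subst m. replace (n - n) with 0 by lia.
           rewrite Nat.add_0_r, <- Hk. apply Hfv.
        -- apply Hfv.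
Qed.

Lemma F2 {V E : Type} (ends : E -> V * V) D :
  Orth ends D -> forall g x y, D g -> joins ends g x y ->
  has_ray_in ends (reach ends (fun h => ~ D h) x) ->
  has_ray_in ends (reach ends (fun h => ~ D h) y) -> False.
Proof.
  intros HO g x y Dg Hj Hx Hy.
  destruct (ray_from ends D x HO Hx) as [ru [fru [Hu0 [Hui Hu]]]].
  destruct (ray_from ends D y HO Hy) as [rw [frw [Hw0 [Hwi Hw]]]].
  set (vz := fun i => if (0 <? i)%Z then rw (Z.to_nat (i - 1)) else ru (Z.to_nat (- i))).
  set (fz := fun i => if (i =? 0)%Z then g else if (0 <? i)%Z then frw (Z.to_nat (i - 1))
                      else fru (Z.to_nat (- i - 1))).
  assert (Hcross : forall a b, ru a = rw b -> False).
  { intros a b Hab. apply (F1 ends D HO g x y Dg Hj).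
    eapply reach_trans; [apply (Hu a)|]. rewrite Hab. apply reach_sym, Hw. }
  apply (HO (fun z => exists i, fz i = z) g).
  - right. exists vz, fz. split; [|split].
    + intros i j. unfold vz.
      destruct (Z.ltb_spec 0 i); destruct (Z.ltb_spec 0 j); intro Hij.
      * apply Hwi in Hij. lia.
      * exfalso. symmetry in Hij. eauto.
      * exfalso. eauto.
      * apply Hui in Hij. lia.
    + intro i. unfold vz, fz. destruct (Z.eqb_spec i 0).
      * subst i. simpl. rewrite Hu0, Hw0. auto.
      * destruct (Z.ltb_spec 0 i); destruct (Z.ltb_spec 0 (i + 1)); try lia.
        -- replace (Z.to_nat (i + 1 - 1)) with (S (Z.to_nat (i - 1))) by lia. apply Hw.
        -- apply joins_sym.
           replace (Z.to_nat (- i)) with (S (Z.to_nat (- i - 1))) by lia.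
           replace (Z.to_nat (- (i + 1))) with (Z.to_nat (- i - 1)) by lia. apply Hu.
    + intro z; tauto.
  - exists 0%Z. reflexivity.
  - auto.
  - intros z [i Hi] Dz. unfold fz in Hi. destruct (Z.eqb_spec i 0); auto.
    exfalso. destruct (Z.ltb_spec 0 i); rewrite <- Hi in Dz; [apply (Hw (Z.to_nat (i - 1)))|apply (Hu (Z.to_nat (- i - 1)))]; auto.
Qed.

Lemma orth_of {V E : Type} (ends : E -> V * V) (Ind : (E -> Prop) -> Prop) :
  is_matroid Ind ->
  (forall C, is_circuit Ind C <-> elementary_algebraic_cycle ends C) ->
  forall D, is_cocircuit Ind D -> Orth ends D.
Proof.
  intros HM HC D HD C e HCe Ce De Hx. apply (ortho Ind HM D C e HD); auto.
  apply HC; auto.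
Qed.

Lemma side_cut {V E : Type} (ends : E -> V * V) (Ind : (E -> Prop) -> Prop) :
  is_matroid Ind ->
  (forall C, is_circuit Ind C <-> elementary_algebraic_cycle ends C) ->
  forall D e a b, is_cocircuit Ind D -> D e -> joins ends e a b ->
  ~ has_ray_in ends (reach ends (fun h => ~ D h) a) ->
  seteq D (cut ends (reach ends (fun h => ~ D h) a)).
Proof.
  intros HM HC D e a b HD De Hj Hr.
  assert (HO := orth_of ends Ind HM HC D HD).
  assert (Hsub : subset (cut ends (reach ends (fun h => ~ D h) a)) D).
  { intros h [c [d [Hh [Hc Hd]]]]. apply NNPP. intro Dh. apply Hd.
    eapply reach_step; eauto. }
  split; auto.
  destruct HD as [_ HDm]. apply HDm; auto.
  apply not_dual_indep. apply (dir1 ends Ind HM HC _ e Hr).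
  exists a, b. split; auto. split; [apply reach_refl|]. apply (F1 ends D HO e a b De Hj).
Qed.

Lemma cocircuit_skew {V E : Type} (ends : E -> V * V) (Ind : (E -> Prop) -> Prop) :
  is_matroid Ind ->
  (forall C, is_circuit Ind C <-> elementary_algebraic_cycle ends C) ->
  forall D, is_cocircuit Ind D -> skew_cut ends D.
Proof.
  intros HM HC D HD.
  assert (HO := orth_of ends Ind HM HC D HD).
  destruct (base_exists Ind HM) as [B0 HB0].
  destruct (not_dual_indep' Ind D B0 (proj1 HD) HB0) as [e [De _]].
  assert (Hj : joins ends e (fst (ends e)) (snd (ends e))).
  { left. destruct (ends e); reflexivity. }
  split; [eauto|split].
  - destruct (classic (has_ray_in ends (reach ends (fun h => ~ D h) (fst (ends e))))) as [H1|H1].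
    + destruct (classic (has_ray_in ends (reach ends (fun h => ~ D h) (snd (ends e))))) as [H2|H2].
      * exfalso. exact (F2 ends D HO e _ _ De Hj H1 H2).
      * eexists. split; [apply (side_cut ends Ind HM HC D e _ _ HD De (joins_sym _ _ _ _ Hj) H2)|exact H2].
    + eexists. split; [apply (side_cut ends Ind HM HC D e _ _ HD De Hj H1)|exact H1].
  - intros F' [z Fz] [HFs HFn] [A [[HA1 HA2] HA]].
    apply HFn. destruct HD as [_ HDm]. apply HDm; auto.
    apply not_dual_indep. intros B HB.
    destruct (dir1 ends Ind HM HC A z HA (HA1 z Fz) B HB) as [x [Hx Bx]]. eauto.
Qed.

Theorem theorem5p1 (V E : Type) (ends : E -> V * V) (I : (E -> Prop) -> Prop) :
  is_matroid I ->
  (forall C, is_circuit I C <-> elementary_algebraic_cycle ends C) ->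
  forall D, is_cocircuit I D <-> skew_cut ends D.
Proof.
  intros HM HC D. split; [apply (cocircuit_skew ends I HM HC)|].
  intros [[z Dz] [[A [[HA1 HA2] HA]] Hmin]].
  assert (HnD : ~ dual_indep I D).
  { apply not_dual_indep. intros B HB.
    destruct (dir1 ends I HM HC A z HA (HA1 z Dz) B HB) as [x [Hx Bx]]. eauto. }
  split; auto.
  intros D' HD' HnD'.
  destruct (contains_cocircuit I HM D' HnD') as [D'' [HD'' HD''s]].
  assert (Hsk := cocircuit_skew ends I HM HC D'' HD'').
  destruct Hsk as [Hne [Hsm _]].
  intros x Dx. apply HD''s. apply NNPP. intro Hx.
  apply (Hmin D'' Hne); auto. split.
  - intros y Hy. apply HD', HD''s; auto.
  - intro Hs. apply Hx, Hs; auto.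
Qed.
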